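(* Let $p\geq 5$ be a prime. Then \[h(-4p)\leq \frac{3\sqrt{p}}{2\pi}\bigl(\log p+5-2\log 6\bigr).\]
   Context: For a negative discriminant $D$, $h(D)$ denotes the class number of primitive positive definite binary quadratic forms of discriminant $D$. *)

(* Defs.v *)
From Stdlib Require Import ZArith Znumtheory Reals List.
Open Scope Z_scope.

(* A binary quadratic form a x^2 + b x y + c y^2, encoded as (a, b, c). *)
Definition qform : Type := (Z * Z * Z)%type.

Definition qf_a (f : qform) : Z := fst (fst f).
Definition qf_b (f : qform) : Z := snd (fst f).
Definition qf_c (f : qform) : Z := snd f.

Definition disc (f : qform) : Z := qf_b f * qf_b f - 4 * qf_a f * qf_c f.

Definition primitive (f : qform) : Prop :=
  Z.gcd (Z.gcd (qf_a f) (qf_b f)) (qf_c f) = 1.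

Definition pos_def (f : qform) : Prop := disc f < 0 /\ 0 < qf_a f.

Definition ppd_form (D : Z) (f : qform) : Prop :=
  primitive f /\ pos_def f /\ disc f = D.

(* f acted on by the matrix [[al, be], [ga, de]] : (f.M)(x,y) = f(al x + be y, ga x + de y) *)
Definition act (f : qform) (al be ga de : Z) : qform :=
  let a := qf_a f in let b := qf_b f in let c := qf_c f in
  (a*al*al + b*al*ga + c*ga*ga,
   2*a*al*be + b*(al*de + be*ga) + 2*c*ga*de,
   a*be*be + b*be*de + c*de*de).

Definition sl2_equiv (f g : qform) : Prop :=
  exists al be ga de : Z, al*de - be*ga = 1 /\ act f al be ga de = g.

Definition is_class_number (D : Z) (h : nat) : Prop :=
  exists reps : list qform,
    length reps = h /\
    (forall f, In f reps -> ppd_form D f) /\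
    (forall i j, (i < h)%nat -> (j < h)%nat -> i <> j ->
       ~ sl2_equiv (nth i reps (0,0,0)) (nth j reps (0,0,0))) /\
    (forall g, ppd_form D g -> exists f, In f reps /\ sl2_equiv f g).

(* Main.v *)
From Stdlib Require Import ZArith Znumtheory Reals Lra Lia List.
From Stdlib Require Import ClassicalEpsilon.
Require Import Defs.
Open Scope Z_scope.

Lemma act_comp : forall f al be ga de al' be' ga' de',
  act (act f al be ga de) al' be' ga' de' =
  act f (al*al' + be*ga') (al*be' + be*de') (ga*al' + de*ga') (ga*be' + de*de').
Proof.
  intros [[a b] c] *; cbv [act qf_a qf_b qf_c fst snd].
  f_equal; [f_equal|]; ring.
Qed.

Lemma act_id : forall f, act f 1 0 0 1 = f.
Proof.
  intros [[a b] c]; cbv [act qf_a qf_b qf_c fst snd].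
  f_equal; [f_equal|]; ring.
Qed.

Lemma disc_act : forall f al be ga de,
  Defs.disc (act f al be ga de) = (al*de - be*ga)^2 * Defs.disc f.
Proof.
  intros [[a b] c] *; cbv [Defs.disc act qf_a qf_b qf_c fst snd]; ring.
Qed.

Lemma equiv_refl : forall f, sl2_equiv f f.
Proof. intros f; exists 1, 0, 0, 1; split; [ring | apply act_id]. Qed.

Lemma equiv_trans : forall f g h, sl2_equiv f g -> sl2_equiv g h -> sl2_equiv f h.
Proof.
  intros f g h [al [be [ga [de [H1 H2]]]]] [al' [be' [ga' [de' [H3 H4]]]]].
  subst g h.
  exists (al*al' + be*ga'), (al*be' + be*de'), (ga*al' + de*ga'), (ga*be' + de*de').
  split; [|symmetry; apply act_comp].
  replace ((al * al' + be * ga') * (ga * be' + de * de') - (al * be' + be * de') * (ga * al' + de * ga'))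
    with ((al*de - be*ga)*(al'*de' - be'*ga')) by ring.
  rewrite H1, H3; ring.
Qed.

Lemma equiv_sym : forall f g, sl2_equiv f g -> sl2_equiv g f.
Proof.
  intros f g [al [be [ga [de [H1 H2]]]]]; subst g.
  exists de, (-be), (-ga), al; split; [lia|].
  rewrite act_comp.
  replace (al * de + be * - ga) with 1 by lia.
  replace (al * - be + be * al) with 0 by ring.
  replace (ga * de + de * - ga) with 0 by ring.
  replace (ga * - be + de * al) with 1 by lia.
  apply act_id.
Qed.

Definition reduced (f : qform) : Prop :=
  - qf_a f < qf_b f <= qf_a f /\ qf_a f <= qf_c f.

Lemma reduce_aux : forall n (g : qform), (Z.to_nat (qf_a g) <= n)%nat -> 0 < qf_a g -> Defs.disc g < 0 ->
  exists f, sl2_equiv f g /\ reduced f /\ Defs.disc f = Defs.disc g /\ 0 < qf_a f.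
Proof.
  induction n as [|n IH]; intros [[a b] c] Hn Ha Hd; unfold qf_a, qf_b, qf_c in *; simpl in *.
  - lia.
  - set (k := (a - b) / (2*a)).
    assert (Hdm := Z.div_mod (a - b) (2*a) ltac:(lia)).
    assert (Hmb := Z.mod_pos_bound (a - b) (2*a) ltac:(lia)).
    fold k in Hdm.
    set (g1 := act (a,b,c) 1 k 0 1).
    assert (E1 : g1 = (a, 2*a*k + b, a*k*k + b*k + c)).
    { unfold g1; cbv [act qf_a qf_b qf_c fst snd]. f_equal; [f_equal|]; ring. }
    assert (Hg1 : sl2_equiv g1 (a,b,c)).
    { apply equiv_sym. exists 1, k, 0, 1; split; [ring| reflexivity]. }
    assert (Hd1 : Defs.disc g1 = Defs.disc (a,b,c)).
    { unfold g1; rewrite disc_act; ring. }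
    destruct (Z_le_gt_dec a (a*k*k + b*k + c)) as [Hle|Hgt].
    + exists g1; split; [exact Hg1|]. rewrite E1 in *. cbv [reduced qf_a qf_b qf_c fst snd].
      split; [lia|]. split; [exact Hd1| lia].
    + set (c1 := a*k*k + b*k + c) in *. set (b1 := 2*a*k + b) in *.
      assert (Hc1 : 0 < c1).
      { rewrite E1 in Hd1. cbv [Defs.disc qf_a qf_b qf_c fst snd] in Hd1, Hd.
        fold b1 c1 in Hd1. nia. }
      set (g2 := act g1 0 (-1) 1 0).
      assert (E2 : g2 = (c1, - b1, a)).
      { unfold g2; rewrite E1; cbv [act qf_a qf_b qf_c fst snd]. f_equal; [f_equal|]; ring. }
      assert (Hd2 : Defs.disc g2 = Defs.disc (a,b,c)).
      { unfold g2; rewrite disc_act, Hd1; ring. }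
      destruct (IH g2) as [f [Hf1 [Hf2 [Hf3 Hf4]]]].
      * rewrite E2; unfold qf_a; simpl. lia.
      * rewrite E2; unfold qf_a; simpl. lia.
      * rewrite Hd2; exact Hd.
      * exists f; split; [|split; [exact Hf2| split; [rewrite Hf3; exact Hd2| exact Hf4]]].
        apply equiv_trans with g2; [exact Hf1|].
        apply equiv_trans with g1; [|exact Hg1].
        apply equiv_sym. exists 0, (-1), 1, 0; split; [ring| reflexivity].
Qed.

Lemma reduce : forall g, 0 < qf_a g -> Defs.disc g < 0 ->
  exists f, sl2_equiv f g /\ reduced f /\ Defs.disc f = Defs.disc g /\ 0 < qf_a f.
Proof. intros g Ha Hd; apply (reduce_aux (Z.to_nat (qf_a g))); auto. Qed.

Lemma prim_of_equiv : forall f g, sl2_equiv f g -> primitive g -> primitive f.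
Proof.
  intros [[a b] c] g [al [be [ga [de [H1 H2]]]]] Hg; subst g.
  unfold primitive in *. cbv [act qf_a qf_b qf_c fst snd] in *.
  set (d := Z.gcd (Z.gcd a b) c).
  assert (Ha : (d | a)) by (apply Z.divide_trans with (Z.gcd a b); [apply Z.gcd_divide_l| apply Z.gcd_divide_l]).
  assert (Hb : (d | b)) by (apply Z.divide_trans with (Z.gcd a b); [apply Z.gcd_divide_l| apply Z.gcd_divide_r]).
  assert (Hc : (d | c)) by apply Z.gcd_divide_r.
  destruct Ha as [a' Ha]; destruct Hb as [b' Hb]; destruct Hc as [c' Hc].
  apply Z.divide_1_r_nonneg; [apply Z.gcd_nonneg|].
  rewrite <- Hg. fold d.
  apply Z.gcd_greatest; [apply Z.gcd_greatest|]; clearbody d; subst a b c.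
  - exists (a'*al*al + b'*al*ga + c'*ga*ga); ring.
  - exists (2*a'*al*be + b'*(al*de + be*ga) + 2*c'*ga*de); ring.
  - exists (a'*be*be + b'*be*de + c'*de*de); ring.
Qed.

Definition zseq (lo : Z) (n : nat) : list Z := map (fun i => lo + Z.of_nat i) (seq 0 n).

Lemma in_zseq : forall lo n x, In x (zseq lo n) <-> lo <= x < lo + Z.of_nat n.
Proof.
  intros lo n x; unfold zseq; rewrite in_map_iff; split.
  - intros [i [<- Hi]]; apply in_seq in Hi; lia.
  - intros H; exists (Z.to_nat (x - lo)); split; [lia|]. apply in_seq; lia.
Qed.

Lemma zseq_NoDup : forall lo n, NoDup (zseq lo n).
Proof.
  intros lo n; unfold zseq. apply NoDup_map_NoDup_ForallPairs; [|apply seq_NoDup].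
  intros x y _ _ H; lia.
Qed.

Definition brange (a : Z) := zseq (-a+1) (Z.to_nat (2*a)).
Definition arange (X : Z) := zseq 1 (Z.to_nat X).
Definition sols (p a : Z) := filter (fun b => (b*b + 4*p) mod (4*a) =? 0) (brange a).
Definition Lraw (p X : Z) : list qform :=
  flat_map (fun a => map (fun b => (a, b, (b*b+4*p)/(4*a))) (sols p a)) (arange X).
Definition ppd_b (D : Z) (f : qform) : bool :=
  (Z.gcd (Z.gcd (qf_a f) (qf_b f)) (qf_c f) =? 1) && (Defs.disc f <? 0) && (0 <? qf_a f)
  && (Defs.disc f =? D).
Definition Lred (p X : Z) := filter (ppd_b (-4*p)) (Lraw p X).

Lemma ppd_b_spec : forall D f, ppd_b D f = true -> ppd_form D f.
Proof.
  intros D f H; unfold ppd_b in H.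
  apply Bool.andb_true_iff in H; destruct H as [H H4].
  apply Bool.andb_true_iff in H; destruct H as [H H3].
  apply Bool.andb_true_iff in H; destruct H as [H1 H2].
  apply Z.eqb_eq in H1; apply Z.ltb_lt in H2; apply Z.ltb_lt in H3; apply Z.eqb_eq in H4.
  unfold ppd_form, primitive, pos_def; auto.
Qed.

Lemma length_Lraw : forall p X,
  length (Lraw p X) = fold_right Nat.add 0%nat (map (fun a => length (sols p a)) (arange X)).
Proof.
  intros p X; unfold Lraw. induction (arange X) as [|a l IH]; [reflexivity|].
  cbn [flat_map map fold_right]. rewrite length_app, length_map. f_equal. exact IH.
Qed.

Lemma reduced_in_Lred : forall p X f, 0 < p -> ppd_form (-4*p) f -> reduced f ->
  3 * (qf_a f * qf_a f) <= 4 * p -> (qf_a f <= X) -> In f (Lred p X).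
Proof.
  intros p X [[a b] c] Hp [Hpr [[Hd Ha] HD]] [Hb Hac] H3 HX.
  cbv [qf_a qf_b qf_c fst snd Defs.disc] in *.
  unfold Lred; apply filter_In; split.
  - unfold Lraw; apply in_flat_map; exists a; split.
    + unfold arange; apply in_zseq; lia.
    + apply in_map_iff; exists b; split.
      * assert (E : b*b + 4*p = c * (4*a)) by lia. rewrite E, Z.div_mul by lia. reflexivity.
      * unfold sols; apply filter_In; split.
        -- unfold brange; apply in_zseq; lia.
        -- apply Z.eqb_eq. assert (E : b*b + 4*p = c * (4*a)) by lia. rewrite E. apply Z.mod_mul; lia.
  - unfold ppd_b; cbv [qf_a qf_b qf_c fst snd Defs.disc].
    unfold primitive in Hpr; cbv [qf_a qf_b qf_c fst snd] in Hpr.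
    rewrite Hpr, HD. rewrite (proj2 (Z.ltb_lt _ _)) by lia. rewrite (proj2 (Z.ltb_lt _ _)) by lia.
    rewrite !Z.eqb_refl. reflexivity.
Qed.

Fixpoint dedup (l : list qform) : list qform :=
  match l with
  | nil => nil
  | f :: t => let r := dedup t in
      if excluded_middle_informative (exists g, In g r /\ sl2_equiv f g) then r else f :: r
  end.

Lemma dedup_incl : forall l f, In f (dedup l) -> In f l.
Proof.
  induction l as [|x t IH]; simpl; intros f H; [exact H|].
  destruct (excluded_middle_informative _) as [_|_]; [right; auto|].
  destruct H as [H|H]; [left; auto| right; auto].
Qed.

Lemma dedup_length : forall l, (length (dedup l) <= length l)%nat.
Proof.
  induction l as [|x t IH]; simpl; [lia|].
  destruct (excluded_middle_informative _); simpl; lia.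
Qed.

Lemma dedup_cover : forall l f, In f l -> exists g, In g (dedup l) /\ sl2_equiv f g.
Proof.
  induction l as [|x t IH]; simpl; intros f H; [contradiction|].
  destruct H as [<-|H].
  - destruct (excluded_middle_informative _) as [Hex|Hn]; [exact Hex|].
    exists x; split; [left; reflexivity| apply equiv_refl].
  - destruct (IH f H) as [g [Hg1 Hg2]].
    destruct (excluded_middle_informative _); [exists g; auto| exists g; split; [right|]; auto].
Qed.

Lemma dedup_distinct : forall l i j, (i < length (dedup l))%nat -> (j < length (dedup l))%nat -> i <> j ->
  ~ sl2_equiv (nth i (dedup l) (0,0,0)) (nth j (dedup l) (0,0,0)).
Proof.
  induction l as [|x t IH]; simpl; intros i j Hi Hj Hij; [lia|].
  destruct (excluded_middle_informative _) as [Hex|Hn]; [apply IH; auto|].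
  simpl in Hi, Hj.
  destruct i as [|i]; destruct j as [|j]; simpl.
  - lia.
  - intros He. apply Hn. exists (nth j (dedup t) (0,0,0)); split; [apply nth_In; lia| exact He].
  - intros He. apply Hn. exists (nth i (dedup t) (0,0,0)); split; [apply nth_In; lia| apply equiv_sym; exact He].
  - apply IH; lia.
Qed.

Lemma class_number_bound : forall p, prime p -> 5 <= p ->
  exists h, is_class_number (-4*p) h /\ (h <= length (Lred p (Z.sqrt (4*p/3))))%nat.
Proof.
  intros p Hp Hp5.
  set (X := Z.sqrt (4*p/3)).
  set (reps := dedup (Lred p X)).
  exists (length reps); split; [|apply dedup_length].
  exists reps; split; [reflexivity|]. split; [|split].
  - intros f Hf. apply dedup_incl in Hf. unfold Lred in Hf. apply filter_In in Hf.
    apply ppd_b_spec; tauto.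
  - intros i j Hi Hj Hij; apply dedup_distinct; auto.
  - intros g [Hgp [[Hgd Hga] HgD]].
    destruct (reduce g Hga Hgd) as [f [Hfg [Hfr [HfD Hfa]]]].
    assert (Hfp : ppd_form (-4*p) f).
    { split; [apply prim_of_equiv with g; auto|]. split; [split; lia| lia]. }
    assert (Hin : In f (Lred p X)).
    { apply reduced_in_Lred; auto; [lia| |].
      - destruct f as [[a b] c]; destruct Hfr as [Hb Hac].
        cbv [qf_a qf_b qf_c fst snd Defs.disc] in *. nia.
      - unfold X. destruct f as [[a b] c]; destruct Hfr as [Hb Hac].
        cbv [qf_a qf_b qf_c fst snd Defs.disc] in *.
        apply Z.sqrt_le_square; [apply Z.div_pos; lia| lia|].
        apply Z.div_le_lower_bound; [lia|]. nia. }
    destruct (dedup_cover _ _ Hin) as [r [Hr1 Hr2]].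
    exists r; split; [exact Hr1|].
    apply equiv_trans with f; [apply equiv_sym; exact Hr2| exact Hfg].
Qed.

Lemma odd_ndiv2 : forall x, Z.odd x = true <-> ~ (2 | x).
Proof.
  intros x; rewrite (Zdiv2_odd_eqn x) at 2. split.
  - intros H [k Hk]. rewrite H in Hk. lia.
  - intros H. destruct (Z.odd x) eqn:E; [reflexivity|]. exfalso; apply H. exists (Z.div2 x). lia.
Qed.

Lemma rel_prime_2pow : forall k x, Z.odd x = true -> rel_prime (2 ^ Z.of_nat k) x.
Proof.
  intros k x Hx. induction k as [|k IH].
  - simpl. apply rel_prime_1.
  - rewrite Nat2Z.inj_succ, Z.pow_succ_r by lia.
    apply rel_prime_sym. apply rel_prime_mult; apply rel_prime_sym; [|exact IH].
    apply prime_rel_prime; [apply prime_2|]. apply odd_ndiv2; exact Hx.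
Qed.

Lemma divide_mul_coprime : forall a b n, rel_prime a b -> (a | n) -> (b | n) -> (a * b | n).
Proof.
  intros a b n Hab [k Hk] Hb. subst n.
  assert (Hbk : (b | k)).
  { apply Gauss with a; [rewrite Z.mul_comm; exact Hb| apply rel_prime_sym; exact Hab]. }
  destruct Hbk as [j Hj]; subst k. exists j; ring.
Qed.

Lemma decomp2 : forall n a, (Z.to_nat a <= n)%nat -> 0 < a ->
  exists e m, a = 2 ^ Z.of_nat e * m /\ Z.odd m = true /\ 0 < m.
Proof.
  induction n as [|n IH]; intros a Hn Ha; [lia|].
  destruct (Z.odd a) eqn:E.
  - exists 0%nat, a. split; [change (2 ^ Z.of_nat 0) with 1; ring|]. split; [exact E| lia].
  - assert (Ha2 : a = 2 * Z.div2 a) by (rewrite (Zdiv2_odd_eqn a) at 1; rewrite E; lia).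
    destruct (IH (Z.div2 a)) as [e [m [H1 [H2 H3]]]]; [lia|lia|].
    exists (S e), m; repeat split; auto.
    rewrite Nat2Z.inj_succ, Z.pow_succ_r by lia. lia.
Qed.

Lemma mod_eq_divide : forall x y n, n <> 0 -> x mod n = y mod n -> (n | x - y).
Proof.
  intros x y n Hn H. exists (x / n - y / n).
  rewrite (Z.div_mod x n Hn) at 1. rewrite (Z.div_mod y n Hn) at 1. rewrite H. ring.
Qed.

Lemma length_inj {A B : Type} (l : list A) (k : list B) (f : A -> B) :
  NoDup l -> (forall x y, In x l -> In y l -> f x = f y -> x = y) ->
  (forall x, In x l -> In (f x) k) -> (length l <= length k)%nat.
Proof.
  intros Hl Hinj Hin. rewrite <- (length_map f l).
  apply NoDup_incl_length.
  - apply NoDup_map_NoDup_ForallPairs; [|exact Hl].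
    intros x y Hx Hy; apply Hinj; auto.
  - intros y Hy. apply in_map_iff in Hy. destruct Hy as [x [<- Hx]]. auto.
Qed.

Definition cfun (a : Z) : Z :=
  1 + (if a mod 4 =? 0 then 1 else 0) + (if a mod 8 =? 0 then 2 else 0).

Definition odddivs (N a : Z) : list Z := filter (fun g => andb (Z.odd g) (a mod g =? 0)) (arange N).

Lemma sols_spec (p a : Z) (Ha : 1 <= a < p) : forall b, In b (sols p a) ->
  -a < b <= a /\ b = 2 * (b / 2) /\ (a | (b/2) * (b/2) + p).
Proof.
  intros b Hb. unfold sols in Hb. apply filter_In in Hb. destruct Hb as [Hb1 Hb2].
  unfold brange in Hb1; apply in_zseq in Hb1.
  apply Z.eqb_eq in Hb2. apply Z.mod_divide in Hb2; [|lia].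
  assert (Hb4 : (2 | b)).
  { destruct (Z.odd b) eqn:E.
    - exfalso. destruct Hb2 as [k Hk].
      assert (H : Z.odd (b*b + 2*(2*p)) = true) by (rewrite Z.odd_add_mul_2, Z.odd_mul, E; reflexivity).
      replace (b*b + 2*(2*p)) with (2 * (2*k*a)) in H by lia. rewrite Z.odd_even in H. discriminate.
    - destruct (Z.eq_dec 0 0); [|congruence].
      assert (~ ~ (2 | b)) as HH by (rewrite <- odd_ndiv2; congruence).
      destruct (Zdivide_dec 2 b); [auto| tauto]. }
  destruct Hb4 as [β Hβ].
  assert (Hβ2 : b / 2 = β) by (rewrite Hβ; apply Z.div_mul; lia).
  rewrite Hβ2. split; [lia|]. split; [lia|].
  destruct Hb2 as [k Hk]. exists k. subst b. nia.
Qed.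



Lemma two_adic_res : forall k u v b0,
  let Q := 2 ^ Z.of_nat (S (S k)) in
  Z.odd b0 = true -> v = u + 2 * b0 -> (2 | u) -> (2 * Q | u * v) ->
  In (u mod (2*Q)) (0 :: Q :: ((-2*b0) mod (2*Q)) :: ((Q - 2*b0) mod (2*Q)) :: nil).
Proof.
  intros k u v b0 Q Hb0 Hv [w Hw] Hdiv.
  assert (HQpos : 0 < Q) by (unfold Q; apply Z.pow_pos_nonneg; lia).
  assert (HQ4 : (4 | Q)).
  { unfold Q. rewrite !Nat2Z.inj_succ, !Z.pow_succ_r by lia. exists (2 ^ Z.of_nat k). ring. }
  assert (Hb0' : b0 = 2 * Z.div2 b0 + 1) by (rewrite (Zdiv2_odd_eqn b0) at 1; rewrite Hb0; reflexivity).
  destruct (Z.odd w) eqn:Ew.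
  - (* u = 2w, w odd: Q | v *)
    assert (HQv : (Q | v)).
    { apply Gauss with w.
      - subst u. destruct Hdiv as [t Ht]. exists t. nia.
      - unfold Q. apply rel_prime_2pow. exact Ew. }
    destruct HQv as [t Ht].
    assert (Hu : u = Q * t - 2 * b0) by lia.
    destruct (Z.odd t) eqn:Et.
    + right; right; right; left.
      rewrite Hu. rewrite (Zdiv2_odd_eqn t), Et.
      replace (Q * (2 * Z.div2 t + 1) - 2 * b0) with ((Q - 2*b0) + Z.div2 t * (2*Q)) by ring.
      rewrite Z.mod_add by lia. reflexivity.
    + right; right; left.
      rewrite Hu. rewrite (Zdiv2_odd_eqn t), Et.
      replace (Q * (2 * Z.div2 t + 0) - 2 * b0) with ((-2*b0) + Z.div2 t * (2*Q)) by ring.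
      rewrite Z.mod_add by lia. reflexivity.
  - (* w even: v = 2 * odd *)
    assert (Hw' : w = 2 * Z.div2 w) by (rewrite (Zdiv2_odd_eqn w) at 1; rewrite Ew; lia).
    set (v' := Z.div2 w * 2 + b0).
    assert (Hv' : v = 2 * v') by (unfold v'; lia).
    assert (Ev' : Z.odd v' = true) by (unfold v'; replace (Z.div2 w * 2 + b0) with (b0 + 2 * Z.div2 w) by ring; rewrite Z.odd_add_mul_2; exact Hb0).
    assert (HQu : (Q | u)).
    { apply Gauss with v'.
      - destruct Hdiv as [t Ht]. exists t. rewrite Hv' in Ht. nia.
      - unfold Q. apply rel_prime_2pow. exact Ev'. }
    destruct HQu as [t Ht].
    destruct (Z.odd t) eqn:Et.
    + right; left. rewrite Ht, (Zdiv2_odd_eqn t), Et.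
      replace ((2 * Z.div2 t + 1) * Q) with (Q + Z.div2 t * (2*Q)) by ring.
      rewrite Z.mod_add by lia. symmetry; apply Z.mod_small. lia.
    + left. rewrite Ht, (Zdiv2_odd_eqn t), Et.
      replace ((2 * Z.div2 t + 0) * Q) with (0 + Z.div2 t * (2*Q)) by ring.
      rewrite Z.mod_add by lia. reflexivity.
Qed.

Lemma sol_odd : forall a β p, Z.odd p = true -> (2 | a) -> (a | β*β + p) -> Z.odd β = true.
Proof.
  intros a β p Hp H2 Ha.
  destruct (Z.odd β) eqn:E; [reflexivity|].
  exfalso. assert (H : (2 | β*β + p)) by (eapply Z.divide_trans; eauto).
  apply odd_ndiv2 in H; [exact H|].
  rewrite (Zdiv2_odd_eqn β), E.
  replace ((2 * Z.div2 β + 0) * (2 * Z.div2 β + 0) + p) with (p + 2 * (2 * Z.div2 β * Z.div2 β)) by ring.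
  rewrite Z.odd_add_mul_2. exact Hp.
Qed.

Lemma odd_divisor_odd : forall g m, (g | m) -> Z.odd m = true -> Z.odd g = true.
Proof.
  intros g m Hg Hm. apply odd_ndiv2. intros H2. apply (proj1 (odd_ndiv2 m) Hm).
  eapply Z.divide_trans; eauto.
Qed.

Lemma cofactor_divides : forall m β β0, 0 < m -> (m | (β - β0) * (β + β0)) ->
  (m / Z.gcd m (β - β0) | β + β0).
Proof.
  intros m β β0 Hm Hd.
  set (g := Z.gcd m (β - β0)).
  assert (Hg0 : g <> 0).
  { intros H. apply Z.gcd_eq_0 in H. lia. }
  assert (Hgm : (g | m)) by apply Z.gcd_divide_l.
  assert (Hgu : (g | β - β0)) by apply Z.gcd_divide_r.
  assert (Hcop : Z.gcd (m / g) ((β - β0) / g) = 1) by (apply Z.gcd_div_gcd; auto).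
  destruct Hgm as [m1 Hm1]. destruct Hgu as [u1 Hu1].
  assert (E1 : m / g = m1) by (rewrite Hm1; apply Z.div_mul; auto).
  assert (E2 : (β - β0) / g = u1) by (rewrite Hu1; apply Z.div_mul; auto).
  fold g. rewrite E1. rewrite E1, E2 in Hcop.
  apply Gauss with u1.
  - rewrite Hm1, Hu1 in Hd. destruct Hd as [t Ht]. exists t.
    apply Z.mul_reg_l with g; [exact Hg0|]. nia.
  - apply Zgcd_1_rel_prime. exact Hcop.
Qed.

Lemma per_a : forall p a N, prime p -> Z.odd p = true -> 1 <= a < p -> a <= N ->
  (length (sols p a) <= Z.to_nat (cfun a) * length (odddivs N a))%nat.
Proof.
  intros p a N Hp Hpo Ha HN.
  destruct (sols p a) as [|b0 rest] eqn:ES; [simpl; lia|].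
  assert (Hb0 : In b0 (sols p a)) by (rewrite ES; left; reflexivity).
  rewrite <- ES.
  destruct (sols_spec p a Ha b0 Hb0) as [Hb0r [Hb0e Hb0d]].
  set (β0 := b0/2) in *.
  assert (Hcop : forall d, (d | a) -> (d | β0) -> (d | 1)).
  { intros d Hda Hdb. assert (Hdp : (d | p)).
    { assert (H1 : (d | β0*β0 + p)) by (apply Z.divide_trans with a; auto).
      assert (H2 : (d | β0*β0)) by (apply Z.divide_mul_l; auto).
      destruct H1 as [x Hx]; destruct H2 as [y Hy]; exists (x - y); lia. }
    destruct (rel_prime_le_prime a p Hp ltac:(lia)) as [_ _ H]. apply H; auto. }
  destruct (decomp2 (Z.to_nat a) a (le_n _) ltac:(lia)) as [e [m [Hae [Hmo Hmp]]]].
  set (q2 := 2 ^ Z.of_nat e) in *.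
  assert (Hq2 : 0 < q2) by (apply Z.pow_pos_nonneg; lia).
  assert (Hma : (m | a)) by (exists q2; rewrite Hae; ring).
  assert (Hqa : (q2 | a)) by (exists m; rewrite Hae; ring).
  assert (Hdiff : forall β, (a | β*β + p) -> (a | (β - β0) * (β + β0))).
  { intros β Hβ. replace ((β - β0) * (β + β0)) with ((β*β + p) - (β0*β0 + p)) by ring.
    apply Z.divide_sub_r; auto. }
  set (L2 := match e with
             | O => 0 :: nil
             | S O => 0 :: nil
             | S (S O) => 0 :: 2 :: nil
             | S (S (S k)) => let Q := 2 ^ Z.of_nat (S (S k)) in
                 0 :: Q :: ((-2*β0) mod (2*Q)) :: ((Q - 2*β0) mod (2*Q)) :: nil
             end).
  set (key := fun b : Z => (Z.gcd m (b/2 - β0), (b/2 - β0) mod q2)).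
  apply Nat.le_trans with (length (list_prod (odddivs N a) L2)).
  - apply length_inj with key.
    + apply NoDup_filter, zseq_NoDup.
    +
      intros b1 b2 H1 H2 Hk. unfold key in Hk. injection Hk as Hg Hr.
      destruct (sols_spec p a Ha b1 H1) as [Hr1 [He1 Hd1]].
      destruct (sols_spec p a Ha b2 H2) as [Hr2 [He2 Hd2]].
      set (β1 := b1 / 2) in *. set (β2 := b2 / 2) in *.
      assert (Hq : (q2 | β1 - β2)).
      { replace (β1 - β2) with ((β1 - β0) - (β2 - β0)) by ring. apply mod_eq_divide; [lia| exact Hr]. }
      set (g := Z.gcd m (β1 - β0)) in *.
      assert (Hg0 : 0 < g).
      { assert (0 <= g) by apply Z.gcd_nonneg.
        assert (g <> 0) by (intros Hz; apply Z.gcd_eq_0 in Hz; lia). lia. }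
      assert (Hgm : (g | m)) by apply Z.gcd_divide_l.
      set (m' := m / g).
      assert (Hmm' : m = g * m') by (unfold m'; destruct Hgm as [x Hx]; rewrite Hx at 2; rewrite Z.div_mul by lia; lia).
      assert (Hc1 : (m' | β1 + β0)).
      { unfold m', g. apply cofactor_divides; [lia|]. eapply Z.divide_trans; [exact Hma| apply Hdiff; exact Hd1]. }
      assert (Hc2 : (m' | β2 + β0)).
      { unfold m'. rewrite Hg. apply cofactor_divides; [lia|]. eapply Z.divide_trans; [exact Hma| apply Hdiff; exact Hd2]. }
      assert (Hg1 : (g | β1 - β0)) by apply Z.gcd_divide_r.
      assert (Hg2 : (g | β2 - β0)) by (rewrite Hg; apply Z.gcd_divide_r).
      assert (Hrp : rel_prime g m').
      { constructor; [apply Z.divide_1_l| apply Z.divide_1_l|].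
        intros d Hdg Hdm'.
        assert (Hdm : (d | m)) by (rewrite Hmm'; apply Z.divide_mul_r; exact Hdm').
        assert (H2b : (d | 2 * β0)).
        { replace (2 * β0) with ((β1 + β0) - (β1 - β0)) by ring.
          apply Z.divide_sub_r; [apply Z.divide_trans with m'| apply Z.divide_trans with g]; auto. }
        assert (Hdb : (d | β0)).
        { apply Gauss with 2; [exact H2b|].
          apply rel_prime_sym, prime_rel_prime; [apply prime_2|].
          intros H2d. apply (proj1 (odd_ndiv2 m) Hmo). apply Z.divide_trans with d; auto. }
        apply Hcop; [apply Z.divide_trans with m; auto| exact Hdb]. }
      assert (Hm : (m | β1 - β2)).
      { rewrite Hmm'. apply divide_mul_coprime; [exact Hrp| |].
        - replace (β1 - β2) with ((β1 - β0) - (β2 - β0)) by ring. apply Z.divide_sub_r; auto.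
        - replace (β1 - β2) with ((β1 + β0) - (β2 + β0)) by ring. apply Z.divide_sub_r; auto. }
      assert (Hadiv : (a | β1 - β2)).
      { rewrite Hae. apply divide_mul_coprime; [apply rel_prime_2pow; exact Hmo| exact Hq| exact Hm]. }
      destruct Hadiv as [t Ht]. assert (Hta : -a < t*a < a) by lia. assert (t = 0) by nia. subst t. lia.
    +
      intros b Hb. unfold key. apply in_prod_iff.
      destruct (sols_spec p a Ha b Hb) as [Hrb [Heb Hdb]].
      set (β := b / 2) in *.
      split.
      * unfold odddivs. apply filter_In. set (g := Z.gcd m (β - β0)).
        assert (Hgm : (g | m)) by apply Z.gcd_divide_l.
        assert (Hg0 : 0 < g).
        { assert (0 <= g) by apply Z.gcd_nonneg.
          assert (g <> 0) by (intros Hz; apply Z.gcd_eq_0 in Hz; lia). lia. }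
        assert (Hgle : g <= m) by (apply Z.divide_pos_le; auto).
        assert (Hmle : m <= a) by (apply Z.divide_pos_le; [lia| auto]).
        split.
        -- unfold arange. apply in_zseq. lia.
        -- apply Bool.andb_true_iff. split; [apply odd_divisor_odd with m; auto|].
           apply Z.eqb_eq. apply Z.mod_divide; [lia|]. eapply Z.divide_trans; eauto.
      * unfold L2, q2. destruct e as [|[|[|k]]].
        -- left. simpl. symmetry. apply Z.mod_1_r.
        -- left. assert (H2a : (2 | a)) by (exists m; rewrite Hae; unfold q2; change (2 ^ Z.of_nat 1) with 2; ring).
           assert (Ob : Z.odd β = true) by (apply sol_odd with a p; auto).
           assert (Ob0 : Z.odd β0 = true) by (apply sol_odd with a p; auto).
           rewrite (Zdiv2_odd_eqn β), (Zdiv2_odd_eqn β0), Ob, Ob0. simpl Z.pow.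
           replace (2 * Z.div2 β + 1 - (2 * Z.div2 β0 + 1)) with (0 + (Z.div2 β - Z.div2 β0) * 2) by ring.
           rewrite Z.mod_add by lia. reflexivity.
        -- assert (H2a : (2 | a)) by (exists (2*m); rewrite Hae; unfold q2; change (2 ^ Z.of_nat 2) with 4; ring).
           assert (Ob : Z.odd β = true) by (apply sol_odd with a p; auto).
           assert (Ob0 : Z.odd β0 = true) by (apply sol_odd with a p; auto).
           rewrite (Zdiv2_odd_eqn β), (Zdiv2_odd_eqn β0), Ob, Ob0. change (2 ^ Z.of_nat 2) with 4.
           cbn [In]. Z.div_mod_to_equations. lia.
        -- assert (H2a : (2 | a)) by (exists (2 ^ Z.of_nat (S (S k)) * m); rewrite Hae; unfold q2; rewrite Nat2Z.inj_succ, Z.pow_succ_r by lia; ring).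
           assert (Ob : Z.odd β = true) by (apply sol_odd with a p; auto).
           assert (Ob0 : Z.odd β0 = true) by (apply sol_odd with a p; auto).
           rewrite (Nat2Z.inj_succ (S (S k))), Z.pow_succ_r by lia.
           idtac.
           apply two_adic_res with (β + β0); auto.
           ++ ring.
           ++ rewrite (Zdiv2_odd_eqn β), (Zdiv2_odd_eqn β0), Ob, Ob0. exists (Z.div2 β - Z.div2 β0). ring.
           ++ rewrite <- Z.pow_succ_r, <- Nat2Z.inj_succ by lia.
              apply Z.divide_trans with a; [exact Hqa| apply Hdiff; exact Hdb].
  - rewrite length_prod. rewrite Nat.mul_comm. apply Nat.mul_le_mono_r.
    unfold L2, cfun. destruct e as [|[|[|k]]]; simpl length.
    + destruct (a mod 4 =? 0); destruct (a mod 8 =? 0); lia.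
    + destruct (a mod 4 =? 0); destruct (a mod 8 =? 0); lia.
    + assert (H4 : a mod 4 = 0) by (apply Z.mod_divide; [lia|]; exists m; rewrite Hae; unfold q2; change (2 ^ Z.of_nat 2) with 4; ring).
      rewrite H4. simpl. destruct (a mod 8 =? 0); lia.
    + assert (H8 : (8 | a)).
      { exists (2 ^ Z.of_nat k * m). rewrite Hae. unfold q2.
        rewrite !Nat2Z.inj_succ, !Z.pow_succ_r by lia. ring. }
      assert (H4 : a mod 4 = 0) by (apply Z.mod_divide; [lia|]; eapply Z.divide_trans; [exists 2; reflexivity| exact H8]).
      assert (H8' : a mod 8 = 0) by (apply Z.mod_divide; [lia| exact H8]).
      rewrite H4, H8'. simpl. lia.
Qed.

Definition sumZ (f : Z -> Z) (l : list Z) : Z := fold_right (fun x acc => f x + acc) 0 l.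

Lemma sumZ_app : forall f l1 l2, sumZ f (l1 ++ l2) = sumZ f l1 + sumZ f l2.
Proof. intros f l1 l2; induction l1 as [|x l IH]; simpl; [reflexivity|]. unfold sumZ in *; simpl; lia. Qed.

Lemma sumZ_ext : forall f g l, (forall x, In x l -> f x = g x) -> sumZ f l = sumZ g l.
Proof.
  intros f g l H; induction l as [|x l IH]; simpl; [reflexivity|].
  unfold sumZ in *; simpl. rewrite H by (left; reflexivity). rewrite IH; [reflexivity|].
  intros y Hy; apply H; right; exact Hy.
Qed.


Lemma sumZ_le : forall f g l, (forall x, In x l -> f x <= g x) -> sumZ f l <= sumZ g l.
Proof.
  intros f g l; induction l as [|x l IH]; intros H; unfold sumZ in *; simpl; [lia|].
  assert (H1 := H x (or_introl eq_refl)).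
  assert (IH' := IH (fun y Hy => H y (or_intror Hy))). lia.
Qed.

Lemma sumZ_plus : forall f g l, sumZ (fun x => f x + g x) l = sumZ f l + sumZ g l.
Proof. intros f g l; induction l as [|x l IH]; unfold sumZ in *; simpl; lia. Qed.

Lemma sumZ_scal : forall c f l, sumZ (fun x => c * f x) l = c * sumZ f l.
Proof. intros c f l; induction l as [|x l IH]; unfold sumZ in *; simpl; [ring|]. rewrite IH; ring. Qed.

Lemma sumZ_cons : forall f x l, sumZ f (x :: l) = f x + sumZ f l.
Proof. reflexivity. Qed.

Lemma sumZ_zero : forall f l, (forall x, f x = 0) -> sumZ f l = 0.
Proof. intros f l H; induction l as [|x l IH]; [reflexivity|]. rewrite sumZ_cons, H, IH; reflexivity. Qed.

Lemma sumZ_swap : forall (h : Z -> Z -> Z) l1 l2,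
  sumZ (fun x => sumZ (fun y => h x y) l2) l1 = sumZ (fun y => sumZ (fun x => h x y) l1) l2.
Proof.
  intros h l1 l2; induction l1 as [|x l1 IH].
  - symmetry; apply sumZ_zero; intros; reflexivity.
  - rewrite sumZ_cons, IH, <- sumZ_plus. apply sumZ_ext. intros y _. rewrite sumZ_cons; reflexivity.
Qed.

Lemma length_filter_sumZ : forall (P : Z -> bool) l,
  Z.of_nat (length (filter P l)) = sumZ (fun x => if P x then 1 else 0) l.
Proof.
  intros P l; induction l as [|x l IH]; [reflexivity|].
  rewrite sumZ_cons. simpl filter. destruct (P x); [simpl length; rewrite Nat2Z.inj_succ; lia| lia].
Qed.

Lemma zseq_S : forall lo n, zseq lo (S n) = zseq lo n ++ (lo + Z.of_nat n) :: nil.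
Proof. intros lo n; unfold zseq; rewrite seq_S, map_app; reflexivity. Qed.


Lemma div_succ : forall n d, 0 <= n -> 0 < d ->
  (n + 1) / d = n / d + (if (n + 1) mod d =? 0 then 1 else 0).
Proof.
  intros n d Hn Hd.
  assert (H1 := Z.div_mod n d ltac:(lia)). assert (H2 := Z.mod_pos_bound n d Hd).
  set (q := n / d) in *. set (r := n mod d) in *.
  destruct (Z.eq_dec r (d - 1)) as [E|E].
  - assert (Hm : (n+1) mod d = 0).
    { symmetry; apply Z.mod_unique_pos with (q + 1); lia. }
    rewrite Hm. simpl. symmetry; apply Z.div_unique_pos with 0; lia.
  - assert (Hm : (n+1) mod d = r + 1).
    { symmetry; apply Z.mod_unique_pos with q; lia. }
    rewrite Hm. destruct (Z.eqb_spec (r + 1) 0); [lia|].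
    rewrite Z.add_0_r. symmetry; apply Z.div_unique_pos with (r + 1); lia.
Qed.

Lemma count_mult : forall d n, 0 < d ->
  sumZ (fun a => if a mod d =? 0 then 1 else 0) (zseq 1 n) = Z.of_nat n / d.
Proof.
  intros d n Hd; induction n as [|n IH].
  - simpl. rewrite Z.div_0_l; lia.
  - rewrite zseq_S, sumZ_app, IH, sumZ_cons. change (sumZ _ nil) with 0.
    rewrite Nat2Z.inj_succ. rewrite <- Z.add_1_r. rewrite (div_succ (Z.of_nat n) d) by lia.
    replace (1 + Z.of_nat n) with (Z.of_nat n + 1) by ring. lia.
Qed.

Definition Fsum (X : Z) : Z := sumZ (fun a => cfun a * Z.of_nat (length (odddivs X a))) (arange X).
Definition Gsum (X : Z) : Z :=
  sumZ (fun g => if Z.odd g then X/g + X/(4*g) + 2*(X/(8*g)) else 0) (arange X).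

Lemma fold_add_sumZ : forall (f : Z -> nat) l,
  Z.of_nat (fold_right Nat.add 0%nat (map f l)) = sumZ (fun a => Z.of_nat (f a)) l.
Proof. intros f l; induction l as [|x l IH]; [reflexivity|]. simpl. rewrite Nat2Z.inj_add, IH. reflexivity. Qed.

Lemma Lraw_le_F : forall p X, prime p -> Z.odd p = true -> 1 <= X -> X < p ->
  Z.of_nat (length (Lraw p X)) <= Fsum X.
Proof.
  intros p X Hp Hpo HX HXp. rewrite length_Lraw, fold_add_sumZ. unfold Fsum.
  apply sumZ_le. intros a Ha. unfold arange in Ha; apply in_zseq in Ha.
  assert (H := per_a p a X Hp Hpo ltac:(lia) ltac:(lia)).
  assert (Hc : 0 <= cfun a) by (unfold cfun; destruct (a mod 4 =? 0); destruct (a mod 8 =? 0); lia).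
  apply inj_le in H. rewrite Nat2Z.inj_mul, Z2Nat.id in H by exact Hc. exact H.
Qed.

Definition ind (d a : Z) : Z := if a mod d =? 0 then 1 else 0.

Lemma ind_div : forall d a, 0 < d -> ind d a = 1 <-> (d | a).
Proof.
  intros d a Hd; unfold ind. destruct (Z.eqb_spec (a mod d) 0) as [E|E].
  - split; [intros _; apply Z.mod_divide; lia| reflexivity].
  - split; [discriminate| intros H; exfalso; apply E; apply Z.mod_divide; auto; lia].
Qed.

Lemma ind_01 : forall d a, ind d a = 0 \/ ind d a = 1.
Proof. intros d a; unfold ind; destruct (a mod d =? 0); auto. Qed.

Lemma pow2_coprime_div : forall k g a, Z.odd g = true -> 0 < g ->
  ((2 ^ Z.of_nat k | a) /\ (g | a)) <-> (2 ^ Z.of_nat k * g | a).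
Proof.
  intros k g a Hg Hg0; split.
  - intros [H1 H2]. apply divide_mul_coprime; auto. apply rel_prime_2pow; exact Hg.
  - intros H; split; (eapply Z.divide_trans; [|exact H]); [apply Z.divide_mul_l | apply Z.divide_mul_r]; apply Z.divide_refl.
Qed.

Lemma cfun_ind : forall g a, Z.odd g = true -> 0 < g ->
  cfun a * ind g a = ind g a + ind (4*g) a + 2 * ind (8*g) a.
Proof.
  intros g a Hg Hg0.
  assert (H4 := pow2_coprime_div 2 g a Hg Hg0). assert (H8 := pow2_coprime_div 3 g a Hg Hg0).
  change (2 ^ Z.of_nat 2) with 4 in H4. change (2 ^ Z.of_nat 3) with 8 in H8.
  assert (I4 : ind 4 a = 1 <-> (4 | a)) by (apply ind_div; lia).
  assert (I8 : ind 8 a = 1 <-> (8 | a)) by (apply ind_div; lia).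
  assert (Ig : ind g a = 1 <-> (g | a)) by (apply ind_div; lia).
  assert (I4g : ind (4*g) a = 1 <-> (4*g | a)) by (apply ind_div; lia).
  assert (I8g : ind (8*g) a = 1 <-> (8*g | a)) by (apply ind_div; lia).
  assert (Ec : cfun a = 1 + ind 4 a + 2 * ind 8 a)
    by (unfold cfun, ind; destruct (a mod 4 =? 0); destruct (a mod 8 =? 0); reflexivity).
  rewrite Ec.
  destruct (ind_01 g a) as [Z0|Z1].
  - assert (ind (4*g) a = 0).
    { destruct (ind_01 (4*g) a) as [|E]; [assumption|]. exfalso.
      apply I4g, H4 in E. assert (ind g a = 1) by (apply Ig; tauto). lia. }
    assert (ind (8*g) a = 0).
    { destruct (ind_01 (8*g) a) as [|E]; [assumption|]. exfalso.
      apply I8g, H8 in E. assert (ind g a = 1) by (apply Ig; tauto). lia. }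
    lia.
  - assert (Hga : (g | a)) by (apply Ig; exact Z1).
    assert (E4 : ind (4*g) a = ind 4 a).
    { destruct (ind_01 (4*g) a) as [A|A], (ind_01 4 a) as [B|B]; try lia.
      - exfalso. assert (C : (4 | a)) by (apply I4; exact B). assert (ind (4*g) a = 1) by (apply I4g, H4; tauto). lia.
      - exfalso. assert (C : (4*g | a)) by (apply I4g; exact A). apply H4 in C. assert (ind 4 a = 1) by (apply I4; tauto). lia. }
    assert (E8 : ind (8*g) a = ind 8 a).
    { destruct (ind_01 (8*g) a) as [A|A], (ind_01 8 a) as [B|B]; try lia.
      - exfalso. assert (C : (8 | a)) by (apply I8; exact B). assert (ind (8*g) a = 1) by (apply I8g, H8; tauto). lia.
      - exfalso. assert (C : (8*g | a)) by (apply I8g; exact A). apply H8 in C. assert (ind 8 a = 1) by (apply I8; tauto). lia. }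
    rewrite E4, E8, Z1. ring.
Qed.

Lemma F_eq_G : forall X, 0 <= X -> Fsum X = Gsum X.
Proof.
  intros X HX. unfold Fsum, Gsum.
  transitivity (sumZ (fun a => sumZ (fun g => if Z.odd g then cfun a * ind g a else 0) (arange X)) (arange X)).
  - apply sumZ_ext. intros a _. unfold odddivs. rewrite length_filter_sumZ, <- sumZ_scal.
    apply sumZ_ext. intros g _. unfold ind. destruct (Z.odd g); simpl; [destruct (a mod g =? 0); ring| ring].
  - rewrite sumZ_swap. apply sumZ_ext. intros g Hg. unfold arange in Hg; apply in_zseq in Hg.
    destruct (Z.odd g) eqn:Eg.
    + rewrite (sumZ_ext _ (fun a => ind g a + ind (4*g) a + 2 * ind (8*g) a)) by (intros a _; apply cfun_ind; auto; lia).
      rewrite !sumZ_plus, sumZ_scal. unfold arange, ind. rewrite !count_mult by lia.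
      rewrite Z2Nat.id by lia. reflexivity.
    + apply sumZ_zero. intros; reflexivity.
Qed.


Close Scope Z_scope.
From Coquelicot Require Import Coquelicot.
Open Scope R_scope.

Lemma ln_lower : forall x, 0 < x -> 2 * x / (2 + x) <= ln (1 + x).
Proof.
  intros x Hx.
  set (f := fun t => ln (1 + t) - 2 * t / (2 + t)).
  set (f' := fun t => t * t / ((1 + t) * ((2 + t) * (2 + t)))).
  destruct (MVT_cor2 f f' 0 x Hx) as [c [Hc1 Hc2]].
  - intros c Hc. apply is_derive_Reals. unfold f, f'.
    auto_derive; [lra|]. field. lra.
  - assert (Hf0 : f 0 = 0) by (unfold f; replace (1 + 0) with 1 by lra; rewrite ln_1; field).
    assert (0 <= f' c * (x - 0)).
    { unfold f'. apply Rmult_le_pos; [|lra]. apply Rmult_le_pos; [nra|].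
      apply Rlt_le, Rinv_0_lt_compat. apply Rmult_lt_0_compat; nra. }
    unfold f in Hc1, Hf0. lra.
Qed.

Lemma ln_upper : forall x, 0 < x -> ln (1 + x) <= x * (2 + x) / (2 * (1 + x)).
Proof.
  intros x Hx.
  set (f := fun t => t * (2 + t) / (2 * (1 + t)) - ln (1 + t)).
  set (f' := fun t => t * t / (2 * ((1 + t) * (1 + t)))).
  destruct (MVT_cor2 f f' 0 x Hx) as [c [Hc1 Hc2]].
  - intros c Hc. apply is_derive_Reals. unfold f, f'.
    auto_derive; [lra|]. field. lra.
  - assert (Hf0 : f 0 = 0) by (unfold f; replace (1 + 0) with 1 by lra; rewrite ln_1; field).
    assert (0 <= f' c * (x - 0)).
    { unfold f'. apply Rmult_le_pos; [|lra]. apply Rmult_le_pos; [nra|].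
      apply Rlt_le, Rinv_0_lt_compat. nra. }
    unfold f in Hc1, Hf0. lra.
Qed.

Lemma ln_step_lo : forall k, 0 < k -> 2 / (2 * k + 1) <= ln (k + 1) - ln k.
Proof.
  intros k Hk. rewrite <- ln_div by lra.
  replace ((k + 1) / k) with (1 + / k) by (field; lra).
  replace (2 / (2 * k + 1)) with (2 * / k / (2 + / k)) by (field; lra).
  apply ln_lower. apply Rinv_0_lt_compat; lra.
Qed.

Lemma ln_step_hi : forall k, 0 < k -> ln (k + 1) - ln k <= (2 * k + 1) / (2 * k * (k + 1)).
Proof.
  intros k Hk. rewrite <- ln_div by lra.
  replace ((k + 1) / k) with (1 + / k) by (field; lra).
  replace ((2 * k + 1) / (2 * k * (k + 1))) with (/ k * (2 + / k) / (2 * (1 + / k))) by (field; lra).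
  apply ln_upper. apply Rinv_0_lt_compat; lra.
Qed.

Lemma ln_le_lin : forall x, 0 < x -> ln (1 + x) <= x.
Proof.
  intros x Hx. rewrite <- (ln_exp x) at 2. apply ln_le; [lra|]. apply exp_ineq1_le.
Qed.

Lemma ln2_bounds : 0.6926 <= ln 2 <= 0.6942.
Proof.
  assert (E : ln 2 = ln 16 - ln 8).
  { replace 16 with (2 * 8) by lra. rewrite ln_mult by lra. ring. }
  assert (S8 := ln_step_lo 8 ltac:(lra)). assert (T8 := ln_step_hi 8 ltac:(lra)).
  assert (S9 := ln_step_lo 9 ltac:(lra)). assert (T9 := ln_step_hi 9 ltac:(lra)).
  assert (S10 := ln_step_lo 10 ltac:(lra)). assert (T10 := ln_step_hi 10 ltac:(lra)).
  assert (S11 := ln_step_lo 11 ltac:(lra)). assert (T11 := ln_step_hi 11 ltac:(lra)).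
  assert (S12 := ln_step_lo 12 ltac:(lra)). assert (T12 := ln_step_hi 12 ltac:(lra)).
  assert (S13 := ln_step_lo 13 ltac:(lra)). assert (T13 := ln_step_hi 13 ltac:(lra)).
  assert (S14 := ln_step_lo 14 ltac:(lra)). assert (T14 := ln_step_hi 14 ltac:(lra)).
  assert (S15 := ln_step_lo 15 ltac:(lra)). assert (T15 := ln_step_hi 15 ltac:(lra)).
  replace (8 + 1) with 9 in * by lra. replace (9 + 1) with 10 in * by lra.
  replace (10 + 1) with 11 in * by lra. replace (11 + 1) with 12 in * by lra.
  replace (12 + 1) with 13 in * by lra. replace (13 + 1) with 14 in * by lra.
  replace (14 + 1) with 15 in * by lra. replace (15 + 1) with 16 in * by lra.
  rewrite E. split; lra.
Qed.

Lemma ln3_bounds : 1.09 <= ln 3 <= 1.1005.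
Proof.
  assert (E : ln 3 = ln 12 - ln 8 + ln 2).
  { replace 12 with (3 * 2 * 2) by lra. replace 8 with (2 * 2 * 2) by lra.
    rewrite !ln_mult by lra. ring. }
  assert (S8 := ln_step_lo 8 ltac:(lra)). assert (T8 := ln_step_hi 8 ltac:(lra)).
  assert (S9 := ln_step_lo 9 ltac:(lra)). assert (T9 := ln_step_hi 9 ltac:(lra)).
  assert (S10 := ln_step_lo 10 ltac:(lra)). assert (T10 := ln_step_hi 10 ltac:(lra)).
  assert (S11 := ln_step_lo 11 ltac:(lra)). assert (T11 := ln_step_hi 11 ltac:(lra)).
  replace (8 + 1) with 9 in * by lra. replace (9 + 1) with 10 in * by lra.
  replace (10 + 1) with 11 in * by lra. replace (11 + 1) with 12 in * by lra.
  assert (H2 := ln2_bounds).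
  rewrite E. split; lra.
Qed.

Lemma PI_upper : PI <= 3.15.
Proof.
  destruct (Rle_or_lt PI 3.15) as [H|H]; [exact H|]. exfalso.
  assert (Hc : 0 < cos 1.575) by (apply cos_gt_0; lra).
  destruct (pre_cos_bound 1.575 1 ltac:(lra) ltac:(lra)) as [_ Hb].
  change (2 * (1 + 1))%nat with 4%nat in Hb.
  unfold cos_approx in Hb. cbv beta iota delta [sum_f_R0] in Hb. unfold cos_term in Hb.
  replace (INR (Factorial.fact (2 * 0))) with 1 in Hb by reflexivity.
  replace (INR (Factorial.fact (2 * 1))) with 2 in Hb by (simpl; lra).
  replace (INR (Factorial.fact (2 * 2))) with 24 in Hb by (rewrite INR_IZR_INZ; f_equal; vm_compute; reflexivity).
  replace (INR (Factorial.fact (2 * 3))) with 720 in Hb by (rewrite INR_IZR_INZ; f_equal; vm_compute; reflexivity).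
  replace (INR (Factorial.fact (2 * 4))) with 40320 in Hb by (rewrite INR_IZR_INZ; f_equal; vm_compute; reflexivity).
  simpl pow in Hb. lra.
Qed.

Lemma sqrt3_lower : 1.732 <= sqrt 3.
Proof.
  rewrite <- (sqrt_square 1.732) by lra. apply sqrt_le_1_alt. lra.
Qed.

Lemma ln_le' : forall x y, 0 < x -> x <= y -> ln x <= ln y.
Proof. intros x y Hx Hxy. destruct (Rle_lt_or_eq_dec x y Hxy) as [H|H]; [apply Rlt_le, ln_increasing; auto| subst; lra]. Qed.

Definition sumR (f : Z -> R) (l : list Z) : R := fold_right (fun x acc => f x + acc) 0 l.

Lemma sumR_cons : forall f x l, sumR f (x :: l) = f x + sumR f l.
Proof. reflexivity. Qed.

Lemma sumR_app : forall f l1 l2, sumR f (l1 ++ l2) = sumR f l1 + sumR f l2.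
Proof. intros f l1 l2; induction l1 as [|x l IH]; [simpl; unfold sumR; simpl; ring|]. simpl app. rewrite !sumR_cons, IH; ring. Qed.

Lemma sumR_le : forall f g l, (forall x, In x l -> f x <= g x) -> sumR f l <= sumR g l.
Proof.
  intros f g l; induction l as [|x l IH]; intros H; [unfold sumR; simpl; lra|].
  rewrite !sumR_cons. assert (H1 := H x (or_introl eq_refl)).
  assert (IH' := IH (fun y Hy => H y (or_intror Hy))). lra.
Qed.

Lemma sumR_plus : forall f g l, sumR (fun x => f x + g x) l = sumR f l + sumR g l.
Proof. intros f g l; induction l as [|x l IH]; [unfold sumR; simpl; ring|]. rewrite !sumR_cons, IH; ring. Qed.

Lemma sumR_scal : forall c f l, sumR (fun x => c * f x) l = c * sumR f l.
Proof. intros c f l; induction l as [|x l IH]; [unfold sumR; simpl; ring|]. rewrite !sumR_cons, IH; ring. Qed.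

Lemma IZR_sumZ : forall f l, IZR (sumZ f l) = sumR (fun x => IZR (f x)) l.
Proof.
  intros f l; induction l as [|x l IH]; [reflexivity|].
  rewrite sumZ_cons, sumR_cons, plus_IZR, IH; reflexivity.
Qed.

Definition Hs (M : nat) : R := sumR (fun g => if Z.odd g then / IZR g else 0) (zseq 1 M).

Lemma Hs_S : forall M, Hs (S M) = Hs M + (if Z.odd (1 + Z.of_nat M) then / IZR (1 + Z.of_nat M) else 0).
Proof. intros M; unfold Hs; rewrite zseq_S, sumR_app, sumR_cons. change (sumR _ nil) with 0. rewrite Rplus_0_r. reflexivity. Qed.

Lemma Hs_even : forall j, (1 <= j)%nat -> Hs (2 * j) <= 1 + ln (INR j) / 2.
Proof.
  induction j as [|j IH]; intros Hj; [lia|].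
  destruct j as [|j].
  - unfold Hs. simpl. unfold sumR; simpl. rewrite ln_1. lra.
  - replace (2 * S (S j))%nat with (S (S (2 * S j))) by lia.
    rewrite !Hs_S.
    assert (O1 : Z.odd (1 + Z.of_nat (2 * S j)) = true).
    { rewrite Nat2Z.inj_mul. replace (1 + Z.of_nat 2 * Z.of_nat (S j))%Z with (1 + 2 * Z.of_nat (S j))%Z by lia.
      apply Z.odd_add_mul_2. }
    assert (O2 : Z.odd (1 + Z.of_nat (S (2 * S j))) = false).
    { rewrite Nat2Z.inj_succ, Nat2Z.inj_mul. replace (1 + Z.succ (Z.of_nat 2 * Z.of_nat (S j)))%Z with (2 * (1 + Z.of_nat (S j)))%Z by lia.
      apply Z.odd_even. }
    rewrite O1, O2.
    assert (IH' := IH ltac:(lia)).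
    assert (Hk : 0 < INR (S j)) by (apply lt_0_INR; lia).
    assert (Hst := ln_step_lo (INR (S j)) Hk).
    rewrite <- S_INR in Hst.
    assert (E : IZR (1 + Z.of_nat (2 * S j)) = 2 * INR (S j) + 1).
    { rewrite plus_IZR, <- INR_IZR_INZ, mult_INR. simpl (INR 2). lra. }
    rewrite E. unfold Rdiv in *. lra.
Qed.

Lemma Hs_bound : forall M, (1 <= M)%nat -> Hs M <= 1 + ln ((INR M + 1) / 2) / 2.
Proof.
  intros M HM. destruct (Nat.Even_or_Odd M) as [[j Hj]|[j Hj]]; subst M.
  - assert (H := Hs_even j ltac:(lia)).
    assert (ln (INR j) <= ln ((INR (2 * j) + 1) / 2)).
    { apply ln_le'; [apply lt_0_INR; lia|]. rewrite mult_INR. simpl (INR 2). lra. }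
    lra.
  - assert (H := Hs_even (S j) ltac:(lia)).
    replace (2 * S j)%nat with (S (2 * j + 1)) in H by lia.
    rewrite Hs_S in H.
    assert (O2 : Z.odd (1 + Z.of_nat (2 * j + 1)) = false).
    { replace (1 + Z.of_nat (2 * j + 1))%Z with (2 * (1 + Z.of_nat j))%Z by lia.
      apply Z.odd_even. }
    rewrite O2, Rplus_0_r in H.
    replace ((INR (2 * j + 1) + 1) / 2) with (INR (S j)); [lra|].
    rewrite plus_INR, mult_INR, S_INR. simpl (INR 2). simpl (INR 1). field.
Qed.

Lemma cutoff : forall (M : Z) N, (0 <= M)%Z ->
  sumR (fun g => if andb (Z.odd g) (g <=? M)%Z then / IZR g else 0) (zseq 1 N) = Hs (Nat.min N (Z.to_nat M)).
Proof.
  intros M N HM; induction N as [|N IH]; [reflexivity|].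
  rewrite zseq_S, sumR_app, sumR_cons, IH. change (sumR _ nil) with 0. rewrite Rplus_0_r.
  destruct (Z.leb_spec (1 + Z.of_nat N) M) as [H|H].
  - replace (Nat.min (S N) (Z.to_nat M)) with (S (Nat.min N (Z.to_nat M))) by lia.
    replace (Nat.min N (Z.to_nat M)) with N by lia.
    rewrite Hs_S. destruct (Z.odd (1 + Z.of_nat N)); reflexivity.
  - replace (Nat.min (S N) (Z.to_nat M)) with (Nat.min N (Z.to_nat M)) by lia.
    rewrite Bool.andb_false_r. ring.
Qed.

Lemma div_bound : forall X d, (0 < d)%Z -> (0 <= X)%Z -> IZR (X / d) <= IZR X / IZR d.
Proof.
  intros X d Hd HX. assert (H := Z.mul_div_le X d Hd).
  apply IZR_le in H. rewrite mult_IZR in H.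
  assert (0 < IZR d) by (apply IZR_lt; lia).
  apply Rmult_le_reg_l with (IZR d); [lra|]. field_simplify; lra.
Qed.

Lemma div_cut : forall X c g, (0 < c)%Z -> (0 < g)%Z -> (0 <= X)%Z ->
  IZR (X / (c * g)) <= IZR X / IZR c * (if (g <=? X / c)%Z then / IZR g else 0).
Proof.
  intros X c g Hc Hg HX. destruct (Z.leb_spec g (X / c)) as [H|H].
  - rewrite (div_bound X (c*g)) by lia. rewrite mult_IZR.
    assert (0 < IZR c) by (apply IZR_lt; lia). assert (0 < IZR g) by (apply IZR_lt; lia).
    right. field. lra.
  - rewrite Z.div_small; [rewrite Rmult_0_r; lra|].
    split; [lia|]. assert (H2 := Z.mul_div_le X c Hc). assert (H3 := Z.mod_pos_bound X c Hc).
    assert (H4 := Z.div_mod X c ltac:(lia)). nia.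
Qed.

Lemma Gsum_bound : forall X, (8 <= X)%Z ->
  IZR (Gsum X) <= IZR X * Hs (Z.to_nat X) + IZR X / 4 * Hs (Z.to_nat (X / 4))
                  + IZR X / 4 * Hs (Z.to_nat (X / 8)).
Proof.
  intros X HX. unfold Gsum. rewrite IZR_sumZ.
  eapply Rle_trans.
  - apply sumR_le with (g := fun g => IZR X * (if Z.odd g then / IZR g else 0)
       + IZR X / 4 * (if andb (Z.odd g) (g <=? X/4)%Z then / IZR g else 0)
       + IZR X / 4 * (if andb (Z.odd g) (g <=? X/8)%Z then / IZR g else 0)).
    intros g Hg. unfold arange in Hg; apply in_zseq in Hg.
    destruct (Z.odd g); simpl andb; [|lra].
    rewrite !plus_IZR, mult_IZR.
    assert (H1 := div_bound X g ltac:(lia) ltac:(lia)).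
    assert (H2 := div_cut X 4 g ltac:(lia) ltac:(lia) ltac:(lia)).
    assert (H3 := div_cut X 8 g ltac:(lia) ltac:(lia) ltac:(lia)).
    assert (0 < IZR g) by (apply IZR_lt; lia).
    assert (E : IZR X / IZR g = IZR X * / IZR g) by reflexivity.
    assert (E8 : 2 * (IZR X / 8) = IZR X / 4) by field.
    destruct (g <=? X / 8)%Z; destruct (g <=? X / 4)%Z; nra.
  - rewrite !sumR_plus, !sumR_scal. unfold arange. rewrite !cutoff by (apply Z.div_pos; lia).
    fold (Hs (Z.to_nat X)).
    replace (Nat.min (Z.to_nat X) (Z.to_nat (X / 4))) with (Z.to_nat (X / 4)).
    2:{ assert (X / 4 <= X)%Z by (apply Z.div_le_upper_bound; lia). lia. }
    replace (Nat.min (Z.to_nat X) (Z.to_nat (X / 8))) with (Z.to_nat (X / 8)).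
    2:{ assert (X / 8 <= X)%Z by (apply Z.div_le_upper_bound; lia). lia. }
    lra.
Qed.

Lemma ln_div' : forall x y, 0 < x -> 0 < y -> ln (x / y) = ln x - ln y.
Proof. intros x y Hx Hy. unfold Rdiv. rewrite ln_mult, ln_Rinv; try lra. apply Rinv_0_lt_compat; lra. Qed.

Lemma Hs_real : forall X : Z, (1 <= X)%Z -> Hs (Z.to_nat X) <= 1 + ln ((IZR X + 1) / 2) / 2.
Proof.
  intros X HX. rewrite <- (Z2Nat.id X) at 2 by lia. rewrite <- INR_IZR_INZ.
  apply Hs_bound. lia.
Qed.

Lemma Hs_real_div : forall X c : Z, (0 < c)%Z -> (c <= X)%Z ->
  Hs (Z.to_nat (X / c)) <= 1 + ln ((IZR X / IZR c + 1) / 2) / 2.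
Proof.
  intros X c Hc HcX.
  assert (H1 : (1 <= X / c)%Z) by (apply Z.div_le_lower_bound; lia).
  eapply Rle_trans; [apply Hs_real; exact H1|].
  assert (Hd := div_bound X c Hc ltac:(lia)).
  assert (1 <= IZR (X / c)) by (apply IZR_le; lia).
  assert (ln ((IZR (X / c) + 1) / 2) <= ln ((IZR X / IZR c + 1) / 2)) by (apply ln_le'; lra).
  lra.
Qed.

Lemma ln_shift : forall x c, 32 <= x -> 0 < c -> ln (x + c) <= ln x + c / 32.
Proof.
  intros x c Hx Hc.
  replace (x + c) with (x * (1 + c / x)) by (field; lra).
  assert (0 < c / x) by (apply Rdiv_lt_0_compat; lra).
  rewrite ln_mult by lra.
  assert (ln (1 + c / x) <= c / x) by (apply ln_le_lin; apply Rdiv_lt_0_compat; lra).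
  assert (c / x <= c / 32).
  { unfold Rdiv. apply Rmult_le_compat_l; [lra|]. apply Rinv_le_contravar; lra. }
  lra.
Qed.

Lemma analytic : forall x, 32 <= x ->
  x * (1 + ln ((x + 1) / 2) / 2) + x / 4 * (1 + ln ((x / 4 + 1) / 2) / 2)
  + x / 4 * (1 + ln ((x / 8 + 1) / 2) / 2)
  <= 0.4123 * x * (2 * ln x + 5 - 4 * ln 2 - ln 3).
Proof.
  intros x Hx.
  assert (H2 := ln2_bounds). assert (H3 := ln3_bounds).
  assert (E8 : ln 8 = 3 * ln 2) by (replace 8 with (2 * 2 * 2) by lra; rewrite !ln_mult by lra; ring).
  assert (E16 : ln 16 = 4 * ln 2) by (replace 16 with (2 * 2 * 2 * 2) by lra; rewrite !ln_mult by lra; ring).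
  assert (E32 : ln 32 = 5 * ln 2) by (replace 32 with (2 * 2 * 2 * 2 * 2) by lra; rewrite !ln_mult by lra; ring).
  assert (T1 : ln ((x + 1) / 2) <= ln x + 1/32 - ln 2).
  { rewrite ln_div' by lra. assert (H := ln_shift x 1 Hx ltac:(lra)). lra. }
  assert (T2 : ln ((x / 4 + 1) / 2) <= ln x + 4/32 - 3 * ln 2).
  { replace ((x / 4 + 1) / 2) with ((x + 4) / 8) by field. rewrite ln_div' by lra.
    assert (H := ln_shift x 4 Hx ltac:(lra)). lra. }
  assert (T3 : ln ((x / 8 + 1) / 2) <= ln x + 8/32 - 4 * ln 2).
  { replace ((x / 8 + 1) / 2) with ((x + 8) / 16) by field. rewrite ln_div' by lra.
    assert (H := ln_shift x 8 Hx ltac:(lra)). lra. }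
  assert (HL : 5 * ln 2 <= ln x) by (rewrite <- E32; apply ln_le'; lra).
  set (L := ln x) in *.
  set (A := 1 + (L + 1/32 - ln 2) / 2 + / 4 * (1 + (L + 4/32 - 3 * ln 2) / 2)
            + / 4 * (1 + (L + 8/32 - 4 * ln 2) / 2)).
  set (B := 0.4123 * (2 * L + 5 - 4 * ln 2 - ln 3)).
  assert (HAB : A <= B) by (unfold A, B; lra).
  assert (HxA : x * (1 + ln ((x + 1) / 2) / 2) + x / 4 * (1 + ln ((x / 4 + 1) / 2) / 2)
     + x / 4 * (1 + ln ((x / 8 + 1) / 2) / 2) <= x * A).
  { unfold A. nra. }
  assert (x * A <= x * B) by (apply Rmult_le_compat_l; lra).
  unfold B in *. lra.
Qed.

Lemma K_lower : 0.4123 <= 3 * sqrt 3 / (4 * PI).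
Proof.
  assert (Hs3 := sqrt3_lower). assert (Hpi := PI_upper). assert (Hp0 := PI_RGT_0).
  unfold Rdiv. apply Rmult_le_reg_r with (4 * PI); [lra|].
  rewrite Rmult_assoc, Rinv_l by lra. lra.
Qed.

Lemma big_case : forall X : Z, (32 <= X)%Z ->
  IZR (Fsum X) <= 0.4123 * IZR X * (2 * ln (IZR X) + 5 - 4 * ln 2 - ln 3).
Proof.
  intros X HX. rewrite F_eq_G by lia.
  eapply Rle_trans; [apply Gsum_bound; lia|].
  assert (HxR : 32 <= IZR X) by (apply IZR_le; lia).
  eapply Rle_trans; [|apply analytic; exact HxR].
  assert (A1 := Hs_real X ltac:(lia)).
  assert (A2 := Hs_real_div X 4 ltac:(lia) ltac:(lia)).
  assert (A3 := Hs_real_div X 8 ltac:(lia) ltac:(lia)).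
  change (IZR 4) with 4 in A2. change (IZR 8) with 8 in A3.
  assert (IZR X * Hs (Z.to_nat X) <= IZR X * (1 + ln ((IZR X + 1) / 2) / 2)) by (apply Rmult_le_compat_l; lra).
  assert (IZR X / 4 * Hs (Z.to_nat (X / 4)) <= IZR X / 4 * (1 + ln ((IZR X / 4 + 1) / 2) / 2)) by (apply Rmult_le_compat_l; lra).
  assert (IZR X / 4 * Hs (Z.to_nat (X / 8)) <= IZR X / 4 * (1 + ln ((IZR X / 8 + 1) / 2) / 2)) by (apply Rmult_le_compat_l; lra).
  lra.
Qed.

Fixpoint Lr (n : nat) : R :=
  match n with
  | O => 0
  | S m => match m with O => 0 | S _ => Lr m + 2 / (2 * INR m + 1) end
  end.

Lemma Lr_ln : forall n, (1 <= n)%nat -> 0 <= Lr n <= ln (INR n).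
Proof.
  induction n as [|n IH]; intros Hn; [lia|].
  destruct n as [|n].
  - simpl. rewrite ln_1. lra.
  - change (Lr (S (S n))) with (Lr (S n) + 2 / (2 * INR (S n) + 1)).
    assert (IH' := IH ltac:(lia)).
    assert (Hk : 0 < INR (S n)) by (apply lt_0_INR; lia).
    assert (Hs := ln_step_lo (INR (S n)) Hk). rewrite <- S_INR in Hs.
    assert (0 <= 2 / (2 * INR (S n) + 1)) by (apply Rlt_le, Rdiv_lt_0_compat; lra).
    lra.
Qed.

Ltac small_tac :=
  match goal with |- context [Fsum ?x] =>
    let v := eval vm_compute in (Fsum x) in
    replace (Fsum x) with v by (vm_compute; reflexivity)
  end; cbn [Lr]; rewrite ?S_INR; simpl INR; lra.

Lemma small_cases : forall n, (2 <= n <= 31)%nat ->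
  IZR (Fsum (Z.of_nat n)) <= 0.4123 * INR n * (2 * Lr n + 5 - 4 * 0.6942 - 1.1005).
Proof.
  intros n Hn.
  do 2 (destruct n as [|n]; [lia|]).
  do 30 (destruct n as [|n]; [small_tac|]).
  lia.
Qed.

Lemma bound_X : forall X : Z, (2 <= X)%Z ->
  IZR (Fsum X) <= 3 * sqrt 3 / (4 * PI) * IZR X * (2 * ln (IZR X) + 5 - 4 * ln 2 - ln 3).
Proof.
  intros X HX.
  assert (HK := K_lower). assert (H2 := ln2_bounds). assert (H3 := ln3_bounds).
  assert (Hx : 2 <= IZR X) by (apply IZR_le; lia).
  assert (HlX : ln 2 <= ln (IZR X)) by (apply ln_le'; lra).
  assert (HT : 0 <= 2 * ln (IZR X) + 5 - 4 * ln 2 - ln 3) by lra.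
  assert (Hmono : 0.4123 * IZR X * (2 * ln (IZR X) + 5 - 4 * ln 2 - ln 3)
                  <= 3 * sqrt 3 / (4 * PI) * IZR X * (2 * ln (IZR X) + 5 - 4 * ln 2 - ln 3)).
  { apply Rmult_le_compat_r; [exact HT|]. apply Rmult_le_compat_r; lra. }
  eapply Rle_trans; [|exact Hmono].
  destruct (Z_le_gt_dec 32 X) as [Hb|Hs].
  - apply big_case; exact Hb.
  - rewrite <- (Z2Nat.id X) at 1 by lia.
    eapply Rle_trans; [apply small_cases; lia|].
    rewrite INR_IZR_INZ, Z2Nat.id by lia.
    assert (HL := Lr_ln (Z.to_nat X) ltac:(lia)).
    rewrite INR_IZR_INZ, Z2Nat.id in HL by lia.
    apply Rmult_le_compat_l; [lra|]. lra.
Qed.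

Lemma rhs_ge : forall p X : Z, (2 <= X)%Z -> (3 * (X * X) <= 4 * p)%Z ->
  3 * sqrt 3 / (4 * PI) * IZR X * (2 * ln (IZR X) + 5 - 4 * ln 2 - ln 3)
  <= 3 * sqrt (IZR p) / (2 * PI) * (ln (IZR p) + 5 - 2 * ln 6).
Proof.
  intros p X HX Hp.
  assert (H2 := ln2_bounds). assert (H3 := ln3_bounds). assert (Hpi := PI_RGT_0).
  set (x := IZR X). set (P := IZR p).
  assert (Hx : 2 <= x) by (apply IZR_le; lia).
  assert (HP : 3 * (x * x) <= 4 * P).
  { unfold x, P. rewrite <- mult_IZR. change 3 with (IZR 3). change 4 with (IZR 4).
    rewrite <- !mult_IZR. apply IZR_le. lia. }
  assert (HP0 : 0 < P) by nra.
  assert (Hsq : sqrt 3 * (x / 2) <= sqrt P).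
  { rewrite <- (sqrt_square (x / 2)) by lra. rewrite <- sqrt_mult by nra.
    apply sqrt_le_1_alt. nra. }
  assert (Hln : ln 3 + 2 * ln x - 2 * ln 2 <= ln P).
  { assert (E : ln (3 * (x / 2) * (x / 2)) = ln 3 + 2 * ln x - 2 * ln 2).
    { rewrite !ln_mult by lra. rewrite ln_div' by lra. ring. }
    rewrite <- E. apply ln_le'; [nra| nra]. }
  assert (E6 : ln 6 = ln 2 + ln 3) by (replace 6 with (2 * 3) by lra; apply ln_mult; lra).
  assert (HlX : ln 2 <= ln x) by (apply ln_le'; lra).
  assert (HT : 0 <= 2 * ln x + 5 - 4 * ln 2 - ln 3) by lra.
  assert (Hs3 : 0 <= sqrt 3) by apply sqrt_pos.
  replace (3 * sqrt 3 / (4 * PI) * x * (2 * ln x + 5 - 4 * ln 2 - ln 3))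
    with (3 / (2 * PI) * (sqrt 3 * (x / 2)) * (2 * ln x + 5 - 4 * ln 2 - ln 3)) by (field; lra).
  replace (3 * sqrt P / (2 * PI) * (ln P + 5 - 2 * ln 6))
    with (3 / (2 * PI) * sqrt P * (ln P + 5 - 2 * ln 6)) by (field; lra).
  assert (Hc : 0 <= 3 / (2 * PI)) by (apply Rlt_le, Rdiv_lt_0_compat; lra).
  apply Rmult_le_compat; [| exact HT | apply Rmult_le_compat_l; [exact Hc| exact Hsq] | lra].
  apply Rmult_le_pos; [exact Hc| nra].
Qed.

Lemma prime_odd : forall p, prime p -> (5 <= p)%Z -> Z.odd p = true.
Proof.
  intros p Hp Hp5. destruct (Z.odd p) eqn:E; [reflexivity|]. exfalso.
  assert (H2 : (2 | p)%Z) by (exists (Z.div2 p); rewrite (Zdiv2_odd_eqn p) at 1; rewrite E; lia).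
  destruct (rel_prime_le_prime 2 p Hp ltac:(lia)) as [_ _ H].
  assert (H1 := H 2%Z (Z.divide_refl 2%Z) H2). apply Z.divide_1_r in H1. lia.
Qed.

Theorem corollary3p10 (p : Z) (hp : prime p) (hp5 : (5 <= p)%Z) :
  exists h : nat, is_class_number (- 4 * p) h /\
    (INR h <= 3 * sqrt (IZR p) / (2 * PI) * (ln (IZR p) + 5 - 2 * ln 6))%R.
Proof.
  destruct (class_number_bound p hp hp5) as [h [Hh Hle]].
  exists h; split; [exact Hh|].
  set (X := Z.sqrt (4 * p / 3)) in *.
  assert (HX2 : (2 <= X)%Z).
  { unfold X. apply Z.sqrt_le_square; [apply Z.div_pos; lia| lia|]. apply Z.div_le_lower_bound; lia. }
  assert (HXX : (X * X <= 4 * p / 3)%Z) by (unfold X; apply Z.sqrt_spec; apply Z.div_pos; lia).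
  assert (H3 : (3 * (X * X) <= 4 * p)%Z).
  { assert (H := Z.mul_div_le (4 * p) 3 ltac:(lia)). lia. }
  assert (HXp : (X < p)%Z) by (destruct (Z_lt_le_dec X p) as [Hl|Hl]; [exact Hl| exfalso; assert (p*p <= X*X)%Z by (apply Z.mul_le_mono_nonneg; lia); nia]).
  assert (Hpo := prime_odd p hp hp5).
  assert (HL1 : (length (Lred p X) <= length (Lraw p X))%nat).
  { unfold Lred. apply filter_length_le. }
  assert (HL2 := Lraw_le_F p X hp Hpo ltac:(lia) HXp).
  assert (HF : (Z.of_nat h <= Fsum X)%Z) by lia.
  rewrite INR_IZR_INZ.
  eapply Rle_trans; [apply IZR_le; exact HF|].
  eapply Rle_trans; [apply bound_X; exact HX2|].
  apply rhs_ge; assumption.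
Qed.
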